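(* Fix $A\in\mathbb R$. There exist constants $C=C(A)$ and $K=K(A)$ such that for all sufficiently small $\epsilon>0$, every $t>0$ and all $x,y\in\mathbb Z_{\ge0}$, $$\mathbf p_t^R(x,y)\le C\,(t^{-1/2}+\epsilon)\,e^{K\epsilon^2t}.$$
   Context: Let $p_t(x)$, $x\in\mathbb Z$, denote the whole-line semi-discrete heat kernel, i.e. the solution of $\partial_tp_t(x)=\frac12\Delta p_t(x)$, $p_0(x)=1_{\{x=0\}}$, where $\Delta f(x)=f(x+1)+f(x-1)-2f(x)$. For $\epsilon>0$ let $\mu_A=1-A\epsilon$. The half-line Robin heat kernel is, for $t\ge0$ and $x,y\in\mathbb Z_{\ge0}$, $$\mathbf p_t^R(x,y)=p_t(x-y)+\mu_Ap_t(x+y+1)+(1-\mu_A^{-2})\sum_{z=2}^\infty p_t(x+y+z)\mu_A^z.$$ *)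

(* Defs.v *)
From Stdlib Require Import Reals ZArith ClassicalEpsilon.
Open Scope R_scope.

(* Value of a convergent real series sum_{n>=0} u n (chosen via classical
   epsilon; equals the true sum whenever the series converges). *)
Definition series_val (u : nat -> R) : R :=
  epsilon (inhabits 0) (fun l => infinite_sum u l).

(* Whole-line semi-discrete heat kernel, solution of
   d/dt p_t(x) = 1/2 (p_t(x+1)+p_t(x-1)-2p_t(x)), p_0 = 1_{x=0}:
   p_t(x) = e^{-t} I_{|x|}(t) = sum_k e^{-t} (t/2)^{2k+|x|} / (k! (k+|x|)!). *)
Definition heat_term (t : R) (x : Z) (k : nat) : R :=
  exp (- t) * (t / 2) ^ (2 * k + Z.abs_nat x)
  / (INR (fact k) * INR (fact (k + Z.abs_nat x))).

Definition heat_kernel (t : R) (x : Z) : R := series_val (heat_term t x).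

Definition muA (A eps : R) : R := 1 - A * eps.

Definition robin_kernel (A eps t : R) (x y : nat) : R :=
  let mu := muA A eps in
  heat_kernel t (Z.of_nat x - Z.of_nat y)
  + mu * heat_kernel t (Z.of_nat x + Z.of_nat y + 1)
  + (1 - / mu ^ 2) *
    series_val (fun n => heat_kernel t (Z.of_nat x + Z.of_nat y + Z.of_nat (n + 2))
                          * mu ^ (n + 2)).

(* Main.v *)
Require Import Defs.
From Stdlib Require Import Reals ZArith Lra Lia Psatz ClassicalEpsilon.
Open Scope R_scope.

Lemma series_val_eq u l : infinite_sum u l -> series_val u = l.
Proof.
  intro H. unfold series_val.
  apply uniqueness_sum with u; [|exact H].
  apply epsilon_spec. exists l; exact H.
Qed.

Lemma cv_const c : Un_cv (fun _ => c) c.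
Proof. intros e He; exists 0%nat; intros; unfold Rdist; rewrite Rminus_diag, Rabs_R0; lra. Qed.

Lemma mono_conv u E : (forall n, 0 <= u n) -> (forall N, sum_f_R0 u N <= E) ->
  exists l, infinite_sum u l /\ 0 <= l <= E.
Proof.
  intros Hp HE.
  assert (Hg : Un_growing (sum_f_R0 u)).
  { intro n; simpl; specialize (Hp (S n)); lra. }
  destruct (growing_cv _ Hg) as [l Hl].
  { exists E; intros x [n ->]; apply HE. }
  exists l; split; [exact Hl|split].
  - apply Rle_trans with (sum_f_R0 u 0). simpl; apply Hp. apply growing_ineq; auto.
  - apply (Rle_cv_lim (Un := sum_f_R0 u) (Vn := fun _ => E)); auto. apply cv_const.
Qed.

Lemma exp_partial x N : 0 <= x -> sum_f_R0 (fun i => x ^ i / INR (fact i)) N <= exp x.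
Proof.
  intro Hx.
  assert (H : exp_in x (exp x)) by (unfold exp; apply proj2_sig).
  replace (sum_f_R0 (fun i => x ^ i / INR (fact i)) N) with
    (sum_f_R0 (fun i => / INR (fact i) * x ^ i) N).
  2:{ apply sum_eq; intros; unfold Rdiv; ring. }
  apply sum_incr; [exact H|]. intro n. 
  apply Rmult_le_pos. left; apply Rinv_0_lt_compat, INR_fact_lt_0. apply pow_le; auto.
Qed.

Definition q (s : R) (n : nat) : R := s ^ n / INR (fact n).

Lemma q_S s n : q s (S n) * INR (S n) = q s n * s.
Proof.
  unfold q. rewrite fact_simpl, mult_INR. simpl pow.
  field. split; [apply INR_fact_neq_0| apply not_0_INR; lia].
Qed.

Lemma q_pos s n : 0 <= s -> 0 <= q s n.
Proof. intro; unfold q; apply Rmult_le_pos; [apply pow_le; auto| left; apply Rinv_0_lt_compat, INR_fact_lt_0]. Qed.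

Lemma bernoulli a n : 0 <= a <= 1 -> 1 - INR n * a <= (1 - a) ^ n.
Proof.
  intro Ha. induction n. simpl; lra.
  rewrite S_INR. simpl pow.
  assert (0 <= INR n) by apply pos_INR.
  assert (0 <= (1-a)^n) by (apply pow_le; lra). nra.
Qed.

Lemma pow_mono_le r i L : 0 <= r <= 1 -> (i <= L)%nat -> r ^ L <= r ^ i.
Proof.
  intros Hr Hi. replace L with (i + (L - i))%nat by lia. rewrite pow_add.
  assert (0 <= r ^ i) by (apply pow_le; lra).
  assert (r ^ (L - i) <= 1) by (rewrite <- (pow1 (L - i)); apply pow_incr; lra).
  nra.
Qed.

Lemma floor_nat x : 0 <= x -> exists n : nat, INR n <= x < INR n + 1.
Proof.
  intro Hx.
  assert (Hu : exists N, x < INR N).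
  { destruct (archimed x) as [H1 _]. exists (Z.to_nat (up x)).
    rewrite INR_IZR_INZ, Z2Nat.id. lra.
    apply le_IZR. lra. }
  destruct Hu as [N HN]. induction N.
  - simpl in HN; lra.
  - destruct (Rlt_or_le x (INR N)) as [h|h]. apply IHN; auto.
    exists N. rewrite S_INR in HN. lra.
Qed.

Lemma block_sum f c b L : (forall n, 0 <= f n) -> (forall i, (i <= L)%nat -> c <= f (b + i)%nat) ->
  (INR L + 1) * c <= sum_f_R0 f (b + L).
Proof.
  intros Hp Hc.
  assert (forall i, (i <= L)%nat -> (INR i + 1) * c <= sum_f_R0 f (b + i)).
  { induction i; intro Hi.
    - simpl. replace (b+0)%nat with b by lia.
      assert (c <= f b) by (pose proof (Hc 0%nat ltac:(lia)) as HH; rewrite Nat.add_0_r in HH; exact HH).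
      destruct b. simpl; lra. simpl.
      assert (0 <= sum_f_R0 f b) by (apply cond_pos_sum; auto). lra.
    - replace (b + S i)%nat with (S (b + i)) by lia. simpl sum_f_R0.
      rewrite S_INR. replace (S (b+i)) with (b + S i)%nat by lia.
      assert (c <= f (b + S i)%nat) by (apply Hc; lia).
      specialize (IHi ltac:(lia)). lra. }
  apply H; lia.
Qed.

Lemma shift_sum f b N : (forall n, 0 <= f n) ->
  sum_f_R0 (fun i => f (b + i)%nat) N <= sum_f_R0 f (b + N).
Proof.
  intro Hp. induction N.
  - simpl. replace (b+0)%nat with b by lia. destruct b. simpl; lra. simpl.
    assert (0 <= sum_f_R0 f b) by (apply cond_pos_sum; auto). lra.
  - simpl. replace (b + S N)%nat with (S (b + N)) by lia. simpl.
    replace (S (b+N)) with (b + S N)%nat by lia. lra.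
Qed.

Lemma poisson_bound s k : 1 <= s -> exp (- s) * q s k <= 3 / sqrt s.
Proof.
  intro Hs.
  assert (Hsq : sqrt s * sqrt s = s) by (apply sqrt_sqrt; lra).
  assert (Hsq1 : 1 <= sqrt s) by (rewrite <- sqrt_1; apply sqrt_le_1_alt; lra).
  destruct (floor_nat (sqrt s / 2)) as [L [HL1 HL2]]. lra.
  assert (HL0 : 0 <= INR L) by apply pos_INR.
  set (r := 1 - INR L / s).
  assert (HLs : INR L <= s / 2) by nra.
  assert (HL2s : INR L * INR L <= s / 4) by nra.
  assert (Hr : 0 <= r <= 1).
  { unfold r; split. 
    assert (INR L / s <= 1/2) by (apply Rmult_le_reg_r with s; [lra|]; field_simplify; lra). lra.
    assert (0 <= INR L / s) by (apply Rmult_le_pos; [lra| left; apply Rinv_0_lt_compat; lra]). lra. }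
  assert (HrL : 3/4 <= r ^ L).
  { eapply Rle_trans; [|apply bernoulli; unfold r in Hr; lra].
    assert (INR L * (INR L / s) <= 1/4).
    { apply Rmult_le_reg_r with s; [lra|]. field_simplify; lra. } lra. }
  assert (Hqk : 0 <= q s k) by (apply q_pos; lra).
  assert (Hrs : r * s = s - INR L) by (unfold r; field; lra).
  assert (Hblock : exists b, forall i, (i <= L)%nat -> r ^ L * q s k <= q s (b + i)).
  { destruct (Rle_or_lt (INR k) s) as [Hk|Hk].
    - exists k. intros i Hi.
      assert (Hup : forall i, (i <= L)%nat -> r ^ i * q s k <= q s (k + i)).
      { induction i0 as [|i0 IH]; intro Hi0.
        - simpl. replace (k+0)%nat with k by lia. lra.
        - specialize (IH ltac:(lia)).
          replace (k + S i0)%nat with (S (k + i0)) by lia.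
          pose proof (q_S s (k + i0)) as E.
          assert (HS : INR (S (k + i0)) <= s + INR L).
          { rewrite S_INR, plus_INR. apply le_INR in Hi0. rewrite S_INR in Hi0. lra. }
          assert (HSp : 0 < INR (S (k + i0))) by (apply lt_0_INR; lia).
          assert (Hri : 0 <= r ^ i0) by (apply pow_le; lra).
          assert (r * INR (S (k + i0)) <= s).
          { assert (r * INR (S (k + i0)) <= r * (s + INR L)) by (apply Rmult_le_compat_l; lra).
            assert (r * (s + INR L) = s - INR L * INR L / s) by (unfold r; field; lra).
            assert (0 <= INR L * INR L / s) by (apply Rmult_le_pos; [nra| left; apply Rinv_0_lt_compat; lra]).
            lra. }
          simpl pow.
          apply Rmult_le_reg_r with (INR (S (k + i0))); auto. rewrite E.
          assert (r ^ i0 * q s k * s <= q s (k + i0) * s) by (apply Rmult_le_compat_r; lra).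
          assert (r * r ^ i0 * q s k * INR (S (k + i0)) <= r ^ i0 * q s k * s).
          { replace (r * r ^ i0 * q s k * INR (S (k + i0))) with ((r ^ i0 * q s k) * (r * INR (S (k + i0)))) by ring.
            apply Rmult_le_compat_l; nra. }
          lra. }
      eapply Rle_trans; [|apply Hup; auto].
      apply Rmult_le_compat_r; auto. apply pow_mono_le; auto.
    - assert (HLk : (L <= k)%nat). { apply INR_le. lra. }
      assert (Hdown : forall j, (j <= L)%nat -> r ^ j * q s k <= q s (k - j)).
      { induction j as [|j IH]; intro Hj.
        - simpl. replace (k-0)%nat with k by lia. lra.
        - specialize (IH ltac:(lia)).
          pose proof (q_S s (k - S j)) as E.
          replace (S (k - S j)) with (k - j)%nat in E by lia.
          assert (HS : s - INR L <= INR (k - j)).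
          { rewrite minus_INR by lia. apply le_INR in Hj. rewrite S_INR in Hj. lra. }
          assert (Hri : 0 <= r ^ j) by (apply pow_le; lra).
          assert (Hq0 : 0 <= q s (k - j)) by (apply q_pos; lra).
          simpl pow.
          apply Rmult_le_reg_r with s; [lra|]. rewrite <- E.
          assert (r * r ^ j * q s k * s = (r ^ j * q s k) * (r * s)) by ring.
          assert ((r ^ j * q s k) * (r * s) <= q s (k - j) * (r * s)).
          { apply Rmult_le_compat_r; nra. }
          assert (q s (k - j) * (r * s) <= q s (k - j) * INR (k - j)).
          { apply Rmult_le_compat_l; lra. }
          lra. }
      exists (k - L)%nat. intros i Hi.
      replace (k - L + i)%nat with (k - (L - i))%nat by lia.
      eapply Rle_trans; [|apply Hdown; lia].
      apply Rmult_le_compat_r; auto. apply pow_mono_le; auto; lia. }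
  destruct Hblock as [b Hb].
  pose proof (block_sum (q s) _ b L (fun n => q_pos s n ltac:(lra)) Hb) as HB.
  pose proof (exp_partial s (b + L) ltac:(lra)) as HE. fold q in HE.
  assert (Hsum : (INR L + 1) * (3/4 * q s k) <= exp s).
  { eapply Rle_trans; [|exact HE]. eapply Rle_trans; [|exact HB].
    apply Rmult_le_compat_l; [lra|]. nra. }
  assert (Hx : exp (-s) * exp s = 1) by (rewrite <- exp_plus; replace (-s+s) with 0 by ring; apply exp_0).
  assert (Hep : 0 < exp (-s)) by apply exp_pos.
  assert (H1 : (sqrt s / 2) * (3/4 * (exp (-s) * q s k)) <= 1).
  { assert ((sqrt s / 2) * (3/4 * q s k) <= exp s) by (eapply Rle_trans; [|exact Hsum]; apply Rmult_le_compat_r; nra).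
    replace ((sqrt s / 2) * (3/4 * (exp (-s) * q s k))) with (exp (-s) * ((sqrt s / 2) * (3/4 * q s k))) by ring.
    rewrite <- Hx. apply Rmult_le_compat_l; lra. }
  apply Rmult_le_reg_r with (sqrt s); [lra|].
  replace (3 / sqrt s * sqrt s) with 3 by (field; lra).
  nra.
Qed.

Lemma heat_kernel_abs t z : heat_kernel t z = heat_kernel t (Z.of_nat (Z.abs_nat z)).
Proof. unfold heat_kernel, heat_term. rewrite Zabs2Nat.id. reflexivity. Qed.

Lemma heat_term_eq t z k : heat_term t z k =
  (exp (-(t/2)) * q (t/2) k) * (exp (-(t/2)) * q (t/2) (k + Z.abs_nat z)).
Proof.
  unfold heat_term, q.
  replace (2 * k + Z.abs_nat z)%nat with (k + (k + Z.abs_nat z))%nat by lia.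
  rewrite pow_add.
  replace (exp (-t)) with (exp (-(t/2)) * exp (-(t/2))) by (rewrite <- exp_plus; f_equal; field).
  field. split; apply INR_fact_neq_0.
Qed.

Lemma exp_cancel s : exp (-s) * exp s = 1.
Proof. rewrite <- exp_plus; replace (-s+s) with 0 by ring; apply exp_0. Qed.

Lemma p_le_1 s j : 0 <= s -> exp (-s) * q s j <= 1.
Proof.
  intro Hs.
  assert (q s j <= exp s).
  { pose proof (exp_partial s (j + 0) Hs) as HE. change (sum_f_R0 (q s) (j + 0) <= exp s) in HE.
    pose proof (shift_sum (q s) j 0 (fun n => q_pos s n Hs)) as HS. simpl in HS.
    rewrite Nat.add_0_r in HS, HE. lra. }
  rewrite <- (exp_cancel s). apply Rmult_le_compat_l; auto. left; apply exp_pos.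
Qed.

Lemma p_le_sqrt t j : 0 < t -> exp (-(t/2)) * q (t/2) j <= 5 / sqrt t.
Proof.
  intro Ht.
  assert (Hst : 0 < sqrt t) by (apply sqrt_lt_R0; lra).
  assert (Hsq : sqrt t * sqrt t = t) by (apply sqrt_sqrt; lra).
  destruct (Rle_or_lt 1 (t/2)) as [H|H].
  - eapply Rle_trans; [apply poisson_bound; auto|].
    assert (Hs2 : sqrt (t/2) * sqrt (t/2) = t/2) by (apply sqrt_sqrt; lra).
    assert (0 < sqrt (t/2)) by (apply sqrt_lt_R0; lra).
    assert (sqrt t <= 5/3 * sqrt (t/2)).
    { apply Rsqr_incr_0_var. unfold Rsqr. nra. nra. }
    apply Rmult_le_reg_r with (sqrt t * sqrt (t/2)). nra.
    replace (3 / sqrt (t / 2) * (sqrt t * sqrt (t / 2))) with (3 * sqrt t) by (field; lra).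
    replace (5 / sqrt t * (sqrt t * sqrt (t / 2))) with (5 * sqrt (t/2)) by (field; lra).
    lra.
  - eapply Rle_trans; [apply p_le_1; lra|].
    assert (sqrt t <= 5) by nra.
    apply Rmult_le_reg_r with (sqrt t); auto.
    replace (5 / sqrt t * sqrt t) with 5 by (field; lra). lra.
Qed.

Lemma heat_gen t z B : 0 < t -> (forall j, exp (-(t/2)) * q (t/2) j <= B) ->
  exists l, infinite_sum (heat_term t z) l /\ 0 <= l <= B.
Proof.
  intros Ht HB.
  set (p := fun j => exp (-(t/2)) * q (t/2) j).
  assert (Hp : forall j, 0 <= p j).
  { intro; unfold p; apply Rmult_le_pos; [left; apply exp_pos| apply q_pos; lra]. }
  assert (HB0 : 0 <= B) by (eapply Rle_trans; [apply (Hp 0%nat)| apply HB]).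
  apply mono_conv.
  - intro n. rewrite heat_term_eq. apply Rmult_le_pos; apply Hp.
  - intro N.
    assert (Hs : sum_f_R0 p N <= 1).
    { unfold p. 
      replace (sum_f_R0 (fun j => exp (- (t / 2)) * q (t / 2) j) N)
        with (exp (- (t/2)) * sum_f_R0 (q (t/2)) N).
      2:{ rewrite scal_sum. apply sum_eq; intros; ring. }
      rewrite <- (exp_cancel (t/2)). apply Rmult_le_compat_l. left; apply exp_pos.
      apply exp_partial; lra. }
    apply Rle_trans with (sum_f_R0 (fun k => p k * B) N).
    + apply sum_Rle; intros n _. rewrite heat_term_eq. fold (p n). fold (p (n + Z.abs_nat z)%nat).
      apply Rmult_le_compat_l; auto. apply HB.
    + rewrite <- scal_sum. nra.
Qed.

Lemma heat_facts t z : 0 < t ->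
  infinite_sum (heat_term t z) (heat_kernel t z) /\ 0 <= heat_kernel t z /\
  heat_kernel t z <= 1 /\ heat_kernel t z <= 5 / sqrt t.
Proof.
  intro Ht.
  destruct (heat_gen t z 1 Ht (fun j => p_le_1 (t/2) j ltac:(lra))) as [l1 [H1 H1']].
  destruct (heat_gen t z (5 / sqrt t) Ht (fun j => p_le_sqrt t j Ht)) as [l2 [H2 H2']].
  assert (E1 : heat_kernel t z = l1) by (apply series_val_eq; auto).
  assert (E2 : heat_kernel t z = l2) by (apply series_val_eq; auto).
  rewrite E1 at 1. split; auto. split. lra. split. lra. lra.
Qed.

Lemma sum_swap (f : nat -> nat -> R) W K :
  sum_f_R0 (fun w => sum_f_R0 (fun k => f w k) K) W =
  sum_f_R0 (fun k => sum_f_R0 (fun w => f w k) W) K.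
Proof.
  induction W.
  - reflexivity.
  - cbn [sum_f_R0]. rewrite IHW, plus_sum. reflexivity.
Qed.

Lemma ht_nu t nu w k : 0 < nu ->
  heat_term t (Z.of_nat w) k * nu ^ w =
  exp (- t) * (q (t/2/nu) k * q (t/2*nu) (k + w)).
Proof.
  intro Hnu. unfold heat_term, q. rewrite Zabs2Nat.id.
  assert (Hp : forall a, a^(k+(k+w)) * nu^w = (a/nu)^k * (a*nu)^(k+w)).
  { intro a. unfold Rdiv. rewrite !Rpow_mult_distr, !pow_add, pow_inv.
    assert (0 < nu^k) by (apply pow_lt; auto). field. lra. }
  replace (2 * k + w)%nat with (k + (k + w))%nat by lia.
  transitivity (exp (-t) * ((t/2)^(k+(k+w)) * nu^w) / (INR (fact k) * INR (fact (k + w)))).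
  { field. split; apply INR_fact_neq_0. }
  rewrite Hp. field. split; apply INR_fact_neq_0.
Qed.

Lemma gen_bound t nu W : 0 < t -> 0 < nu ->
  sum_f_R0 (fun w => heat_kernel t (Z.of_nat w) * nu ^ w) W <= exp ((t/2) * (nu + /nu - 2)).
Proof.
  intros Ht Hnu.
  set (F := fun K w => nu ^ w * sum_f_R0 (heat_term t (Z.of_nat w)) K).
  assert (Hcv1 : forall w, Un_cv (fun K => F K w) (heat_kernel t (Z.of_nat w) * nu ^ w)).
  { intro w. rewrite Rmult_comm. unfold F.
    apply CV_mult. apply cv_const. apply (heat_facts t (Z.of_nat w) Ht). }
  assert (Hcv : Un_cv (fun K => sum_f_R0 (F K) W) (sum_f_R0 (fun w => heat_kernel t (Z.of_nat w) * nu ^ w) W)).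
  { induction W.
    - simpl. apply Hcv1.
    - cbn [sum_f_R0]. apply CV_plus; auto. }
  set (E := exp (- t) * (exp (t/2/nu) * exp (t/2*nu))).
  assert (HE : exp ((t/2) * (nu + /nu - 2)) = E).
  { unfold E. rewrite <- !exp_plus. f_equal. field. lra. }
  rewrite HE.
  apply (Rle_cv_lim (Un := fun K => sum_f_R0 (F K) W) (Vn := fun _ => E)); auto; [|apply cv_const].
  intro K. unfold F.
  assert (Hs1 : 0 <= t/2/nu) by (apply Rmult_le_pos; [lra| left; apply Rinv_0_lt_compat; lra]).
  assert (Hs2 : 0 <= t/2*nu) by nra.
  transitivity (sum_f_R0 (fun w => sum_f_R0 (fun k => exp (- t) * (q (t/2/nu) k * q (t/2*nu) (k + w))) K) W).
  { right. apply sum_eq. intros w _. rewrite scal_sum. apply sum_eq. intros k _. apply ht_nu; auto. }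
  rewrite sum_swap.
  transitivity (sum_f_R0 (fun k => exp (- t) * q (t/2/nu) k * exp (t/2*nu)) K).
  { apply sum_Rle. intros k _.
    replace (sum_f_R0 (fun w => exp (- t) * (q (t / 2 / nu) k * q (t / 2 * nu) (k + w))) W)
      with ((exp (-t) * q (t/2/nu) k) * sum_f_R0 (fun w => q (t/2*nu) (k + w)) W).
    2:{ rewrite scal_sum. apply sum_eq; intros; ring. }
    apply Rmult_le_compat_l.
    { apply Rmult_le_pos; [left; apply exp_pos| apply q_pos; auto]. }
    eapply Rle_trans; [apply shift_sum; intro; apply q_pos; auto|].
    pose proof (exp_partial (t/2*nu) (k + W) Hs2) as HH. exact HH. }
  replace (sum_f_R0 (fun k => exp (- t) * q (t / 2 / nu) k * exp (t / 2 * nu)) K)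
    with ((exp (-t) * exp (t/2*nu)) * sum_f_R0 (q (t/2/nu)) K).
  2:{ rewrite scal_sum. apply sum_eq; intros; ring. }
  unfold E. replace (exp (- t) * (exp (t / 2 / nu) * exp (t / 2 * nu))) with
    ((exp (-t) * exp (t/2*nu)) * exp (t/2/nu)) by ring.
  apply Rmult_le_compat_l. left; apply Rmult_lt_0_compat; apply exp_pos.
  apply (exp_partial (t/2/nu) K Hs1).
Qed.

Lemma robin_series t mu x y : 0 < t -> 0 < mu ->
  exists S, infinite_sum (fun n => heat_kernel t (Z.of_nat x + Z.of_nat y + Z.of_nat (n + 2))
                          * mu ^ (n + 2)) S /\
    0 <= S <= exp ((t/2) * (Rmax 1 mu + / Rmax 1 mu - 2)).
Proof.
  intros Ht Hmu. set (nu := Rmax 1 mu).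
  assert (Hnu1 : 1 <= nu) by apply Rmax_l.
  assert (Hnu2 : mu <= nu) by apply Rmax_r.
  set (g := fun w => heat_kernel t (Z.of_nat w) * nu ^ w).
  assert (Hg : forall w, 0 <= g w).
  { intro w; unfold g; apply Rmult_le_pos; [apply (heat_facts t _ Ht)| apply pow_le; lra]. }
  assert (Heq : forall n, (Z.of_nat x + Z.of_nat y + Z.of_nat (n + 2))%Z = Z.of_nat (x + y + 2 + n)) by (intro; lia).
  apply mono_conv.
  - intro n. apply Rmult_le_pos; [apply (heat_facts t _ Ht)| apply pow_le; lra].
  - intro N.
    apply Rle_trans with (sum_f_R0 (fun n => g (x + y + 2 + n)%nat) N).
    + apply sum_Rle. intros n _. rewrite Heq. unfold g.
      apply Rmult_le_compat_l. apply (heat_facts t _ Ht).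
      apply Rle_trans with (nu ^ (n + 2)). apply pow_incr; lra.
      apply Rle_pow; auto; lia.
    + eapply Rle_trans; [apply shift_sum; auto|]. apply gen_bound; lra.
Qed.

Theorem mainTheorem7 (A : R) :
  exists C K : R, exists eps0 : R, 0 < eps0 /\
    forall eps : R, 0 < eps -> eps < eps0 ->
    forall t : R, 0 < t ->
    forall x y : nat,
      robin_kernel A eps t x y <= C * (/ sqrt t + eps) * exp (K * eps ^ 2 * t).
Proof.
  exists (13 + 10 * Rabs A), (A ^ 2), (1 / (2 * (Rabs A + 1))).
  assert (HA : 0 <= Rabs A) by apply Rabs_pos.
  split. { apply Rdiv_lt_0_compat; lra. }
  intros eps He He0 t Ht x y.
  set (d := A * eps).
  assert (Hd : Rabs d < 1/2).
  { unfold d. rewrite Rabs_mult, (Rabs_right eps) by lra.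
    apply Rmult_lt_compat_r with (r := 2 * (Rabs A + 1)) in He0; [|lra].
    replace (1 / (2 * (Rabs A + 1)) * (2 * (Rabs A + 1))) with 1 in He0 by (field; lra). nra. }
  assert (Hd' : - (1/2) < d < 1/2) by (split; [apply Rabs_def2 in Hd| apply Rabs_def2 in Hd]; lra).
  unfold robin_kernel. cbv zeta. unfold muA. fold d.
  set (mu := 1 - d).
  assert (Hmu : 1/2 < mu < 3/2) by (unfold mu; lra).
  destruct (robin_series t mu x y Ht ltac:(lra)) as [S [HS [HS0 HS1]]].
  rewrite (series_val_eq _ _ HS).
  destruct (heat_facts t (Z.of_nat x - Z.of_nat y) Ht) as [_ [H10 [_ H12]]].
  destruct (heat_facts t (Z.of_nat x + Z.of_nat y + 1) Ht) as [_ [H20 [_ H22]]].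
  set (X := exp (A ^ 2 * eps ^ 2 * t)).
  assert (HX1 : 1 <= X).
  { unfold X. rewrite <- exp_0. destruct (Req_dec (A ^ 2 * eps ^ 2 * t) 0) as [h|h].
    rewrite h; lra. left; apply exp_increasing.
    assert (0 <= A ^ 2 * eps ^ 2 * t) by (apply Rmult_le_pos; [apply Rmult_le_pos; apply pow2_ge_0 | lra]). lra. }
  assert (HSX : S <= X).
  { eapply Rle_trans; [exact HS1|]. unfold X.
    assert (Hexp : t / 2 * (Rmax 1 mu + / Rmax 1 mu - 2) <= A ^ 2 * eps ^ 2 * t).
    { assert (Hd2 : A ^ 2 * eps ^ 2 = d * d) by (unfold d; ring). rewrite Hd2.
      unfold Rmax. destruct (Rle_dec 1 mu) as [h|h].
      - assert (Hm : mu + / mu - 2 = (mu - 1) * (mu - 1) / mu) by (field; lra).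
        rewrite Hm.
        assert ((mu - 1) * (mu - 1) / mu <= d * d).
        { apply Rmult_le_reg_r with mu; [lra|]. replace ((mu - 1) * (mu - 1) / mu * mu) with ((mu-1)*(mu-1)) by (field; lra).
          unfold mu in *. assert (0 <= d * d * (- d)) by (apply Rmult_le_pos; nra). nra. }
        nra.
      - replace (1 + / 1 - 2) with 0 by field. nra. }
    destruct (Rle_lt_or_eq_dec _ _ Hexp) as [h|h]. left; apply exp_increasing; auto. rewrite h; lra. }
  set (coef := 1 - / mu ^ 2).
  assert (Hcoef : coef <= 10 * Rabs A * eps).
  { assert (Hm2 : 0 < mu ^ 2) by nra.
    assert (coef * mu ^ 2 = mu ^ 2 - 1) by (unfold coef; field; lra).
    assert (Habs : Rabs A * eps = Rabs d) by (unfold d; rewrite Rabs_mult, (Rabs_right eps); lra).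
    replace (10 * Rabs A * eps) with (10 * Rabs d) by lra.
    apply Rmult_le_reg_r with (mu ^ 2); auto.
    destruct (Rle_or_lt 0 d) as [hd|hd].
    - rewrite Rabs_right by lra. unfold mu in *. nra.
    - rewrite Rabs_left by lra. unfold mu in *. nra. }
  assert (HcS : coef * S <= 10 * Rabs A * eps * X).
  { destruct (Rle_or_lt coef 0) as [h|h].
    - assert (coef * S <= 0) by nra. assert (0 <= Rabs A * eps * X) by (apply Rmult_le_pos; nra). nra.
    - apply Rle_trans with (coef * X). apply Rmult_le_compat_l; lra.
      apply Rmult_le_compat_r; lra. }
  assert (Hsq : 0 < sqrt t) by (apply sqrt_lt_R0; lra).
  set (u := / sqrt t).
  assert (Hu : 0 < u) by (apply Rinv_0_lt_compat; auto).
  replace (5 / sqrt t) with (5 * u) in H12, H22 by (unfold u, Rdiv; ring).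
  assert (mu * heat_kernel t (Z.of_nat x + Z.of_nat y + 1) <= 3/2 * (5 * u)) by nra.
  assert (u <= u * X) by nra.
  assert (0 <= Rabs A * u * X) by (apply Rmult_le_pos; nra).
  assert (0 <= eps * X) by nra.
  nra.
Qed.
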